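(* Let $T>0$, $0\leq t<T$, $\tau=T-t$, $r\geq 0$, $\sigma>0$, $n\in\mathbb{N}$, and let $S_t>0$ and $M_t>0$ with $S_t\geq M_t$. Put $u=e^{\sigma\sqrt{\tau/n}}$, $d=u^{-1}$, $q=\frac{u-e^{-r\tau/n}}{u-d}$ and $j_0=\frac{\log(S_t/M_t)}{\sigma\sqrt{\tau/n}}$. Let $\Lambda^{j_0}_{j,k,n}$ and $J$ be as in the context, and define the discrete (Cheuk–Vorst) price of the European lookback call with floating strike at time $t$ by \[ C^{fl}_n(t) = S_t \sum_{j\in J} (1-u^{-j})\sum_{k=0}^n \Lambda^{j_0}_{j,k,n}\, q^k(1-q)^{n-k}. \] Then $C^{fl}_n(t) = S_t(V_1-V_2+V_3)$, where, with $k_{\min}=n-\lfloor \frac{n+j_0}{2}\rfloor$ and $k_{\max}=k_{\max}(j)=\lfloor\frac{n-\lfloor j_0\rfloor-1+j}{2}\rfloor$, \begin{align*} V_1&=\sum_{k=k_{\min}}^{n}(1-u^{n-j_0-2k}) \binom{n}{k}q^k(1-q)^{n-k},\\ V_2&=\sum_{k=k_{\min}}^{n-\lfloor j_0\rfloor-1}(1-u^{n-j_0-2k})\binom{n}{k+\lfloor j_0\rfloor+1} q^k(1-q)^{n-k},\\ V_3&=\sum_{j=0}^{n-\lfloor j_0\rfloor-1}(1-u^{-j}) \sum_{k=j}^{k_{\max}}\Big[\binom{n}{k-j}-\binom{n}{k-j-1}\Big] q^k(1-q)^{n-k}. \end{align*}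
   Context: Here $S_t$ is the current price of the underlying and $M_t=\min_{t^*\leq t}S_{t^*}$ its running minimum since emission. Consider the directed graph with initial node $(0,j_0)$ in which, from each node $(m,j_m)$ with $0\leq m<n$, there are exactly two edges: an ''up'' edge to $(m+1,j_m+1)$ and a ''down'' edge to $(m+1,\max(j_m-1,0))$. $\Lambda^{j_0}_{j,k,n}$ is the number of paths from $(0,j_0)$ to $(n,j)$ with exactly $k$ up jumps, and $J$ is the set of levels $j$ such that $(n,j)$ is reachable from $(0,j_0)$. $\lfloor x\rfloor$ is the integer part; binomial coefficients $\binom{n}{i}$ are $0$ for $i<0$ or $i>n$. *)

(* Defs.v *)
From HB Require Import structures.
From mathcomp Require Import all_boot all_order all_algebra.
From mathcomp Require Import all_classical all_reals all_analysis.
Set Implicit Arguments. Unset Strict Implicit. Unset Printing Implicit Defensive.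
Import Order.TTheory GRing.Theory Num.Theory.
Local Open Scope ring_scope.

Section Lookback.
Variable R : realType.

Definition lb_step (j : R) (b : bool) : R := if b then j + 1 else Num.max (j - 1) 0.

Definition lb_level (j0 : R) (s : seq bool) : R := foldl lb_step j0 s.

(* Lambda^{j0}_{j,k,n}: number of paths of length n from (0,j0) to (n,j)
   with exactly k up jumps (a path = the sequence of its n edges). *)
Definition Lambda (j0 j : R) (k n : nat) : nat :=
  #|[set p : n.-tuple bool | (lb_level j0 p == j) && (count id p == k)]|.

Definition Jlevels (j0 : R) (n : nat) : seq R :=
  undup [seq lb_level j0 (tval p) | p : n.-tuple bool].

Definition C_fl (S j0 u q : R) (n : nat) : R :=
  S * \sum_(j <- Jlevels j0 n)
        (1 - u `^ (- j)) *
        \sum_(0 <= k < n.+1) (Lambda j0 j k n)%:R * q ^+ k * (1 - q) ^+ (n - k).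

(* Binomial coefficient with integer lower index, 0 for i < 0 or i > n. *)
Definition binZ (n : nat) (i : int) : R :=
  if (i < 0)%R then 0 else ('C(n, absz i))%:R.

Definition zrange (a b : int) : seq int :=
  [seq a + (i%:Z) | i <- iota 0 (if (a <= b)%R then (absz (b - a)).+1 else 0%N)].

Definition V1 (j0 u q : R) (n : nat) : R :=
  let kmin := (n%:Z - Num.floor ((n%:R + j0) / 2))%R in
  \sum_(k <- zrange kmin n%:Z)
     (1 - u `^ (n%:R - j0 - 2 * k%:~R)) * binZ n k * q ^ k * (1 - q) ^ (n%:Z - k).

Definition V2 (j0 u q : R) (n : nat) : R :=
  let kmin := (n%:Z - Num.floor ((n%:R + j0) / 2))%R in
  \sum_(k <- zrange kmin (n%:Z - Num.floor j0 - 1))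
     (1 - u `^ (n%:R - j0 - 2 * k%:~R)) * binZ n (k + Num.floor j0 + 1)
       * q ^ k * (1 - q) ^ (n%:Z - k).

Definition V3 (j0 u q : R) (n : nat) : R :=
  \sum_(j <- zrange 0 (n%:Z - Num.floor j0 - 1))
     (1 - u `^ (- j%:~R)) *
     \sum_(k <- zrange j (Num.floor ((n%:Z - Num.floor j0 - 1 + j)%:~R / 2 : R)))
        (binZ n (k - j) - binZ n (k - j - 1)) * q ^ k * (1 - q) ^ (n%:Z - k).

End Lookback.

(* Main.v *)
Require Import Defs.
From HB Require Import structures.
From mathcomp Require Import all_boot all_order all_algebra.
From mathcomp Require Import all_classical all_reals all_analysis.
From mathcomp Require Import zify ring lra.
Set Implicit Arguments. Unset Strict Implicit. Unset Printing Implicit Defensive.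
Import Order.TTheory GRing.Theory Num.Theory.
Local Open Scope ring_scope.
Section Tup.
Variable R : realType.
Lemma sum_tupleS n (h : n.+1.-tuple bool -> R) :
  \sum_(p : n.+1.-tuple bool) h p =
  \sum_(t : n.-tuple bool) h [tuple of true :: t] + \sum_(t : n.-tuple bool) h [tuple of false :: t].
Proof.
rewrite (reindex (fun bt : bool * n.-tuple bool => [tuple of bt.1 :: bt.2])) /=; last first.
  exists (fun t : n.+1.-tuple bool => (thead t, [tuple of behead t])).
    by move=> [b t] _; congr pair; apply: val_inj.
  by move=> t _; rewrite /= -tuple_eta.
rewrite -(pair_big xpredT xpredT (fun (b : bool) (t : n.-tuple bool) => h [tuple of b :: t])) /=.
by rewrite big_bool.
Qed.


Variables (x y : R) (F : R -> R).

Lemma binZ_neg n (i : int) : i < 0 -> binZ R n i = 0.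
Proof. by rewrite /binZ => ->. Qed.

Lemma binZ_big n (i : int) : Posz n < i -> binZ R n i = 0.
Proof.
rewrite /binZ => h; case: ifP => // _; rewrite bin_small //.
case: i h => // k /=; lia.
Qed.

Lemma binZ_symm n (i : int) : binZ R n (Posz n - i) = binZ R n i.
Proof.
case: (ltrP i 0) => h1; first by rewrite (binZ_neg _ h1) binZ_big //; lia.
case: (ltrP (Posz n) i) => h2; first by rewrite (binZ_big h2) binZ_neg //; lia.
case: i h1 h2 => // k _ /= hk.
have hk' : (k <= n)%N by lia.
by rewrite subzn // /binZ /= bin_sub.
Qed.

Lemma binZS n (i : int) : binZ R n.+1 i = binZ R n (i - 1) + binZ R n i.
Proof.
rewrite /binZ; case: (ltrP i 0) => hi.
  by rewrite ifT ?add0r //; lia.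
case: i hi => [k|k] hk; last by [].
case: k hk => [|k] _.
  by rewrite /= !bin0 add0r.
have -> : (Posz k.+1 - 1) = Posz k by rewrite -addn1 PoszD addrK.
by rewrite /= binS natrD addrC.
Qed.

Definition P n (c : int -> R) := \sum_(k < n.+1) c (Posz k) * x ^+ k * y ^+ (n - k).

Lemma shiftx n c : c (-1) = 0 -> x * P n c = P n.+1 (fun k => c (k - 1)).
Proof.
move=> h; rewrite /P [in RHS]big_ord_recl /= (_ : Posz 0 - 1 = -1) // h !mul0r add0r.
rewrite mulr_sumr; apply: eq_bigr => i _.
rewrite /bump /= add1n (_ : Posz i.+1 - 1 = Posz i); last by rewrite -addn1 PoszD addrK.
by rewrite subSS exprS; ring.
Qed.

Lemma shifty n c : c (Posz n.+1) = 0 -> y * P n c = P n.+1 c.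
Proof.
move=> h; rewrite /P [in RHS]big_ord_recr /= h !mul0r addr0.
rewrite mulr_sumr; apply: eq_bigr => i _.
rewrite /= subSn; last by rewrite -ltnS.
by rewrite exprS; ring.
Qed.

Lemma P_add n c1 c2 : P n c1 + P n c2 = P n (fun k => c1 k + c2 k).
Proof. rewrite /P -big_split; apply: eq_bigr => i _. by rewrite mulrDl mulrDl. Qed.

Lemma P_ext n c1 c2 : (forall k : nat, (k <= n)%N -> c1 (Posz k) = c2 (Posz k)) -> P n c1 = P n c2.
Proof. by move=> h; apply: eq_bigr => i _; rewrite h // -ltnS. Qed.


Definition aco n (m : int) (f : R) (k : int) : R :=
  if (Posz n <= 2 * k + m) then (binZ R n k - binZ R n (k + m + 1)) * F (m%:~R + f + 2 * k%:~R - n%:R) else 0.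
Definition D n (k j : int) : R := binZ R n (k - j) - binZ R n (k - j - 1).
Definition bco n (m j : int) (k : int) : R := if (2 * k + m + 1 <= Posz n + j) then D n k j else 0.
Definition A n m f := P n (aco n m f).
Definition B K n m := \sum_(j < K) F (j%:R) * P n (bco n m (Posz j)).

Lemma A_rec n (m : int) f : 0 <= m -> A n.+1 m f = x * A n (m + 1) f + y * A n (m - 1) f.
Proof.
move=> hm; rewrite /A shiftx; last first.
  rewrite /aco; case: ifP => // h; rewrite binZ_neg ?binZ_big ?subrr ?mul0r //; lia.
rewrite shifty; last first.
  rewrite /aco; case: ifP => // h; rewrite binZ_big ?binZ_big ?subrr ?mul0r //; lia.
rewrite P_add; apply: P_ext => k hk; rewrite /aco.
have e1 : (Posz n.+1 <= 2 * Posz k + m) = (Posz n <= 2 * (Posz k - 1) + (m + 1)) by lia.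
have e2 : (Posz n.+1 <= 2 * Posz k + m) = (Posz n <= 2 * (Posz k) + (m - 1)) by lia.
rewrite -e1 -e2; case: ifP => _; last by rewrite addr0.
have f1 : ((m + 1)%:~R + f + 2 * (Posz k - 1)%:~R - n%:R = m%:~R + f + 2 * (Posz k)%:~R - n.+1%:R :> R).
  rewrite intrD intrB -!natz -[n.+1]addn1 !natrD; ring.
have f2 : ((m - 1)%:~R + f + 2 * (Posz k)%:~R - n%:R = m%:~R + f + 2 * (Posz k)%:~R - n.+1%:R :> R).
  rewrite intrB -!natz -[n.+1]addn1 !natrD; ring.
rewrite f1 f2 -mulrDl; congr (_ * _).
rewrite !binZS.
have -> : Posz k - 1 + (m + 1) + 1 = Posz k + m + 1 by ring.
have -> : Posz k + m + 1 - 1 = Posz k + (m - 1) + 1 by ring.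
ring.
Qed.

Lemma B_rec K n (m : int) : 0 <= m -> B K n.+1 m = x * B K n (m + 1) + y * B K n (m - 1).
Proof.
move=> hm; rewrite /B !mulr_sumr -big_split; apply: eq_bigr => j _.
rewrite /= (mulrCA x) (mulrCA y) -mulrDr; congr (_ * _).
rewrite shiftx; last first.
  rewrite /bco /D; case: ifP => // h; rewrite !binZ_neg ?subrr //; lia.
rewrite shifty; last first.
  rewrite /bco /D; case: ifP => // h; rewrite !binZ_neg ?subrr //; lia.
rewrite P_add; apply: P_ext => k hk; rewrite /bco.
have e1 : (2 * Posz k + m + 1 <= Posz n.+1 + Posz j) = (2 * (Posz k - 1) + (m + 1) + 1 <= Posz n + Posz j) by lia.
have e2 : (2 * Posz k + m + 1 <= Posz n.+1 + Posz j) = (2 * Posz k + (m - 1) + 1 <= Posz n + Posz j) by lia.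
rewrite -e1 -e2; case: ifP => _; last by rewrite addr0.
rewrite /D !binZS.
have -> : Posz k - 1 - Posz j = Posz k - Posz j - 1 by ring.

ring.
Qed.

Lemma A_m1 n f : A n (-1) f = 0.
Proof.
rewrite /A /P big1 // => k _; rewrite /aco; case: ifP => _; last by rewrite !mul0r.
by rewrite (_ : Posz k + -1 + 1 = Posz k) ?subrr ?mul0r //; ring.
Qed.

Lemma B_refl K n : (n < K)%N -> B K n (-1) = A n 0 0 + B K n 0.
Proof.
move=> hK.
have -> : B K n (-1) = B K n 0 + \sum_(j < K) F j%:R *
     P n (fun k => if 2 * k == Posz n + Posz j then D n k j else 0).
  rewrite /B -big_split; apply: eq_bigr => j _; rewrite /= -mulrDr P_add.
  congr (_ * _); apply: P_ext => k hk; rewrite /bco.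
  case: ifP => h1; case: ifP => h2; case: ifP => h3 //; rewrite ?addr0 ?add0r //; exfalso; lia.
rewrite addrC; congr (_ + _).
rewrite /P /A.
under eq_bigr do rewrite mulr_sumr.
rewrite exchange_big /=; apply: eq_bigr => k _.
rewrite /aco.
case: (leqP n (2 * k)) => hk.
- have hc : (Posz n <= 2 * Posz k + 0) by lia.
  rewrite hc.
  have hlt : (2 * k - n < K)%N by have := ltn_ord k; lia.
  rewrite (bigD1 (Ordinal hlt)) //=.
  rewrite big1 ?addr0; last first.
    move=> j hj; rewrite ifF ?mul0r ?mulr0 //.
    apply/negbTE; move: hj; apply: contra => /eqP h; apply/eqP; apply: val_inj => /=; lia.
  rewrite ifT; last lia.
  have e1 : (0%:~R + 2 * (Posz k)%:~R - n%:R : R) = (2 * k - n)%N%:R.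
    rewrite natrB // natrM; ring.
  rewrite e1 /D.
  have -> : Posz k - Posz (2 * k - n) = Posz n - Posz k by lia.
  have -> : Posz n - Posz k - 1 = Posz n - (Posz k + 1) by ring.
  rewrite !binZ_symm; ring.
- have hc : (Posz n <= 2 * Posz k + 0) = false by lia.
  rewrite hc !mul0r; apply: big1 => j _.
  have hj : (2 * Posz k == Posz n + Posz j) = false by lia.
  by rewrite hj !mul0r mulr0.
Qed.

Fixpoint G n (L : R) : R :=
  if n is n'.+1 then x * G n' (L + 1) + y * G n' (Num.max (L - 1) 0) else F L.

Lemma G_closed n : forall (m : nat) (f : R) K, 0 <= f < 1 -> (n < K)%N ->
  G n (m%:R + f) = A n m f + B K n m.
Proof.
elim: n => [|n IH] m f K hf hK.
  rewrite /= /A /B /P big_ord1 /aco /=.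
  rewrite big1; last first.
    move=> j _; rewrite big_ord1 /bco /=; case: ifP => h; last by rewrite !mul0r mulr0.
    rewrite /D !binZ_neg; [by rewrite subrr !mul0r mulr0| lia | lia].
  rewrite addr0 (binZ_big (n:=0%N) (i:=0%Z + m + 1)); last lia.
  rewrite /binZ /= subr0 !mulr1 mul1r; congr F; rewrite mulr0 subr0 addr0 //.
have hK' : (n < K)%N by lia.
rewrite /= A_rec // B_rec //.
case: m => [|m].
  have e1 : Num.max (0%:R + f - 1) 0 = 0%:R + 0.
    by rewrite add0r addr0 /Num.max; case: ifP => // h; lra.
  rewrite e1 (IH 0%N 0 K) ?lexx //; last lra.
  have e2 : 0%:R + f + 1 = 1%:R + f by ring.
  rewrite e2 (IH 1%N f K hf hK') A_m1 -B_refl //.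
  rewrite (_ : Posz 0 + 1 = Posz 1) //; ring.
have e1 : Num.max (m.+1%:R + f - 1) 0 = m%:R + f.
  rewrite -addn1 natrD; have hm : 0 <= m%:R :> R by [].
  by rewrite /Num.max; case: ifP => h; lra.
have e2 : m.+1%:R + f + 1 = m.+2%:R + f by rewrite -(addn1 m.+1) natrD; ring.
rewrite e1 e2 (IH _ f K hf hK') (IH _ f K hf hK').
have -> : Posz m.+1 + 1 = Posz m.+2 by lia.
have -> : Posz m.+1 - 1 = Posz m by lia.
ring.
Qed.

Lemma G_tuple n L : G n L = \sum_(p : n.-tuple bool)
   F (lb_level L p) * x ^+ count id p * y ^+ (n - count id p).
Proof.
elim: n L => [|n IH] L.
  rewrite (big_pred1 [tuple]) /=; last by move=> t; rewrite [t]tuple0 /= eqxx.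
  by rewrite /lb_level /= !mulr1.
rewrite /= sum_tupleS !IH !mulr_sumr; congr (_ + _); apply: eq_bigr => t _;
  rewrite /lb_level /=.
  by rewrite add1n subSS exprS; ring.
have hc : (count id t <= n)%N by rewrite -[X in (_ <= X)%N](size_tuple t) count_size.
rewrite add0n subSn // exprS; ring.
Qed.

End Tup.
Section Cfl.
Variable R : realType.

Lemma Cfl_G (S j0 u q : R) n :
  C_fl S j0 u q n = S * G q (1 - q) (fun L => 1 - u `^ (- L)) n j0.
Proof.
rewrite /C_fl G_tuple; congr (S * _).
set w := fun k : nat => q ^+ k * (1 - q) ^+ (n - k).
have inner j : \sum_(0 <= k < n.+1) (Lambda j0 j k n)%:R * q ^+ k * (1 - q) ^+ (n - k) =
   \sum_(p : n.-tuple bool) (if lb_level j0 p == j then w (count id p) else 0).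
  rewrite /Lambda.
  under eq_bigr do rewrite -sumr_const mulr_suml mulr_suml.
  under eq_bigr do rewrite big_mkcond.
  rewrite exchange_big /=; apply: eq_bigr => p _.
  case: eqP => hl.
    rewrite (eq_bigr (fun k => if k == count id p then w k else 0)); last first.
      by move=> k _; rewrite inE hl eqxx /= eq_sym; case: eqP => //; rewrite mul1r.
    rewrite -big_mkcond /= big_nat1_eq ifT //.
    by rewrite /= ltnS -[X in (_ <= X)%N](size_tuple p) count_size.
  by apply: big1 => k _; rewrite inE; case: eqP.
under eq_bigr do rewrite inner mulr_sumr.
rewrite exchange_big /=; apply: eq_bigr => p _.
have hin : lb_level j0 p \in Jlevels j0 n.
  by rewrite /Jlevels mem_undup; apply/mapP; exists p; rewrite ?mem_enum.
rewrite (bigD1_seq (lb_level j0 p)) //= ?undup_uniq // eqxx big1_seq ?addr0.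
  by rewrite /w mulrA.
by move=> j /andP[hj _]; rewrite eq_sym (negbTE hj) mulr0.
Qed.
End Cfl.
Section Zr.
Variable R : realType.

Lemma mem_zrange (a b k : int) : (k \in zrange a b) = (a <= k <= b).
Proof.
rewrite /zrange; apply/mapP/idP.
  move=> [i]; case: ifP => hab; last by rewrite in_nil.
  rewrite mem_iota add0n => hi ->; apply/andP; split; first lia.
  have : (i <= `|b - a|)%N by rewrite -ltnS.
  lia.
move=> /andP[h1 h2]; exists `|k - a|%N.
  rewrite ifT; last lia.
  rewrite mem_iota add0n ltnS; lia.
lia.
Qed.

Lemma zrange_uniq a b : uniq (zrange a b).
Proof. by rewrite /zrange map_inj_uniq ?iota_uniq // => i j /addrI []. Qed.

Lemma mem_posz_iota (N : nat) (k : int) : (k \in map Posz (iota 0 N.+1)) = (0 <= k <= Posz N).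
Proof.
apply/mapP/idP.
  by move=> [i]; rewrite mem_iota add0n => hi ->; lia.
move=> hk; exists `|k|%N; last lia.
rewrite mem_iota add0n; lia.
Qed.

Lemma zrange_sum (a b : int) (N : nat) (g : int -> R) :
  (forall k, a <= k <= b -> (k < 0) || (Posz N < k) -> g k = 0) ->
  \sum_(k <- zrange a b) g k = \sum_(i < N.+1) (if (a <= Posz i <= b) then g (Posz i) else 0).
Proof.
move=> hg.
rewrite (eq_big_seq (fun k => if (0 <= k <= Posz N) then g k else 0)); last first.
  move=> k; rewrite mem_zrange => hk; case: ifP => // h; apply: hg => //; lia.
rewrite -big_mkcond -big_filter.
rewrite -(big_mkord xpredT (fun i : nat => if a <= Posz i <= b then g (Posz i) else 0)).
rewrite /index_iota subn0 -(big_map Posz xpredT (fun k => if a <= k <= b then g k else 0)).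
rewrite [in RHS]big_mkcond -[in RHS]big_mkcond -[in RHS]big_filter; apply: perm_big.
apply: uniq_perm; rewrite ?filter_uniq ?zrange_uniq ?map_inj_uniq ?iota_uniq //.
  by move=> i j [].
move=> k; rewrite !mem_filter mem_zrange mem_posz_iota; lia.
Qed.
End Zr.
Section Fl.
Variable R : realType.
Lemma floor_half (z : int) (f : R) : 0 <= f < 1 -> Num.floor ((z%:~R + f) / 2) = (z %/ 2)%Z.
Proof.
move=> hf; apply: floor_def.
have hz := divz_eq z 2.
have h0 : 0 <= (z %% 2)%Z by apply: modz_ge0.
have h1 : (z %% 2 < 2)%Z by apply: ltz_pmod.
have h1' : (z %% 2 <= 1)%Z by lia.
have H0 : 0 <= (z %% 2)%Z%:~R :> R by rewrite ler0z.
have H1 : (z %% 2)%Z%:~R <= 1 :> R by rewrite -(ler_int R) in h1'.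
have hzR : z%:~R = ((z %/ 2)%Z)%:~R * 2 + ((z %% 2)%Z)%:~R :> R.
  by rewrite {1}hz intrD intrM.
rewrite hzR intrD.
set d := ((z %/ 2)%Z)%:~R : R; set r := ((z %% 2)%Z)%:~R : R.
move: H0 H1; rewrite -/r => H0 H1.
apply/andP; split; lra.
Qed.
End Fl.
Section Fin.
Variable R : realType.
Let Fu (u : R) := fun L : R => 1 - u `^ (- L).

Lemma natzR (n : nat) : (Posz n)%:~R = n%:R :> R. Proof. by []. Qed.
Lemma exprzP (q : R) (n : nat) : q ^ (Posz n) = q ^+ n. Proof. by []. Qed.

Lemma V12_A (j0 u q : R) n (m : nat) : Num.floor j0 = Posz m ->
  V1 j0 u q n - V2 j0 u q n = A q (1 - q) (Fu u) n m (j0 - m%:R).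
Proof.
move=> hm.
have hmj : m%:R <= j0 < m%:R + 1.
  by have := floor_itv j0; rewrite hm intrD natzR.
have hfl : Num.floor ((n%:R + j0) / 2) = ((Posz n + Posz m) %/ 2)%Z.
  rewrite -(floor_half (Posz n + Posz m) (f := j0 - m%:R)); last lra.
  by congr Num.floor; rewrite intrD !natzR; congr (_ / 2); ring.
rewrite /V1 /V2 hfl hm.
rewrite (zrange_sum (N:=n)); last first.
  move=> k _ hk; rewrite (_ : binZ R n k = 0) ?mulr0 ?mul0r //.
  case/orP: hk => hk; [exact: binZ_neg|exact: binZ_big].
rewrite (zrange_sum (N:=n)); last first.
  move=> k /andP[hk1 hk2] hk; rewrite (_ : binZ R n (k + Posz m + 1) = 0) ?mulr0 ?mul0r //.
  apply: binZ_big; lia.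
rewrite /A /P -sumrB; apply: eq_bigr => i _.
have hi : (i <= n)%N by rewrite -ltnS.
rewrite /aco !exprzP subzn // exprzP.
have e1 : (Posz n - ((Posz n + Posz m) %/ 2)%Z <= Posz i) = (Posz n <= 2 * Posz i + Posz m) by lia.
rewrite !e1.
have hi2 : (Posz i <= Posz n) = true by lia.
rewrite hi2 andbT.
case: (boolP (Posz n <= 2 * Posz i + Posz m)) => h1; last first.
  by rewrite /= subr0 !mul0r.
rewrite /=.
have eF : Fu u (m%:~R + (j0 - m%:R) + 2 * (Posz i)%:~R - n%:R) = 1 - u `^ (n%:R - j0 - 2 * (Posz i)%:~R).
  rewrite /Fu; congr (1 - u `^ _); rewrite natzR; ring.
rewrite eF.
case: ifP => h2.
  ring.
rewrite (@binZ_big R n (Posz i + Posz m + 1)); last lia.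
ring.
Qed.

Lemma V3_B (j0 u q : R) n (m : nat) : Num.floor j0 = Posz m ->
  V3 j0 u q n = B q (1 - q) (Fu u) n.+1 n m.
Proof.
move=> hm; rewrite /V3 hm.
rewrite (zrange_sum (N:=n)); last by move=> k hk1 hk2; exfalso; lia.
rewrite /B; apply: eq_bigr => j _.
rewrite /Fu natzR.
have hfl z : Num.floor (z%:~R / 2 : R) = (z %/ 2)%Z.
  by have := floor_half z (f := 0 : R); rewrite addr0 => ->; rewrite ?lexx ?ltr01.
case: ifP => hj.
  congr (_ * _).
  rewrite hfl (zrange_sum (N:=n)); last by move=> k hk1 hk2; exfalso; lia.
  rewrite /P; apply: eq_bigr => k _.
  have hk : (k <= n)%N by rewrite -ltnS.
  rewrite /bco /D.
  have ez : Posz n - Posz k = Posz (n - k) by rewrite subzn.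
  rewrite ez /exprz.
  have e : (Posz j <= Posz k <= ((Posz n - Posz m - 1 + Posz j) %/ 2)%Z) =
     (Posz j <= Posz k) && (2 * Posz k + Posz m + 1 <= Posz n + Posz j) by lia.
  rewrite e.
  have [hkj|hkj] := ltrP (Posz k) (Posz j).
    rewrite (@binZ_neg R n (Posz k - Posz j)); last lia.
    rewrite (@binZ_neg R n (Posz k - Posz j - 1)); last lia.
    by rewrite subrr; repeat (case: ifP => _); rewrite ?mul0r ?mulr0.
  by rewrite /=; case: ifP => _; rewrite ?mul0r.
rewrite /P big1 ?mulr0 // => k _.
rewrite /bco /D.
have [hkj|hkj] := ltrP (Posz k) (Posz j).
  rewrite (@binZ_neg R n (Posz k - Posz j)); last lia.
  rewrite (@binZ_neg R n (Posz k - Posz j - 1)); last lia.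
  by rewrite subrr; repeat (case: ifP => _); rewrite ?mul0r.
rewrite ifF ?mul0r //; lia.
Qed.
End Fin.
Theorem theorem2p2 (R : realType) (T t tau r sigma S M u d q j0 : R) (n : nat)
  (hT : 0 < T) (ht0 : 0 <= t) (htT : t < T) (htau : tau = T - t)
  (hr : 0 <= r) (hsigma : 0 < sigma) (hn : (0 < n)%N)
  (hS : 0 < S) (hM : 0 < M) (hSM : M <= S)
  (hu : u = expR (sigma * Num.sqrt (tau / n%:R)))
  (hd : d = u^-1)
  (hq : q = (u - expR (- (r * tau / n%:R))) / (u - d))
  (hj0 : j0 = ln (S / M) / (sigma * Num.sqrt (tau / n%:R))) :
  C_fl S j0 u q n = S * (V1 j0 u q n - V2 j0 u q n + V3 j0 u q n).
Proof.
have hj0pos : 0 <= j0.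
  rewrite hj0; apply: divr_ge0.
    by apply: ln_ge0; rewrite ler_pdivlMr // mul1r.
  by apply: mulr_ge0; [exact: ltW|exact: sqrtr_ge0].
have hfl0 : 0 <= Num.floor j0 by rewrite floor_ge0.
set m := `|Num.floor j0|%N.
have hm : Num.floor j0 = Posz m by rewrite /m gez0_abs.
have hmj : m%:R <= j0 < m%:R + 1.
  by have := floor_itv j0; rewrite hm intrD natzR.
rewrite (@V12_A R j0 u q n m hm) (@V3_B R j0 u q n m hm) Cfl_G; congr (S * _).
have e : j0 = m%:R + (j0 - m%:R) by rewrite addrC subrK.
rewrite [in LHS]e (G_closed _ _ _ _ (K := n.+1)) //; lra.
Qed.
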